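(* Let $\mathbf{F}$ be a finite field with $q$ elements, $n\ge1$, and $V_j=\operatorname{span}(b_1,\dots,b_j)\subseteq\mathbf{F}^n$ for the standard basis $b_1,\dots,b_n$. Let $T\colon V_{n-1}\to V_n$ be a semi-idempotent partial linear map with domain $V_{n-1}$ such that $\operatorname{im}T\not\subset V_{n-1}$, and let $r\ge0$. Then for every function $f\colon\mathbf{Z}_{\ge0}\to\mathbf{Z}$, \[ \sum_{\substack{S\colon V_n\to V_n\ \text{semi-idempotent}\\ \operatorname{rank} S\le r,\ S|_{V_{n-1}}=T}}\mu(\mathrm{srk}\,S)\,f(\operatorname{rank} S)=0. \]
   Context: A partial linear map on $V$ is a linear map $T\colon W\to V$ from a subspace $W$; composition of partial maps $T\circ S$ has domain $S^{-1}(\operatorname{dom}T)$; $T^0=\mathrm{id}$. A partial linear map $T$ is semi-idempotent if for some $N\ge0$, $T$ acts as the identity on $\operatorname{im}T^N$; for an operator $S\colon V\to V$ this is equivalent to $V=X\oplus Y$ with $S|_X=\mathrm{id}$, $S|_Y$ nilpotent, $X,Y$ $S$-stable. $\mathrm{srk}$ denotes the stable rank: $\dim\operatorname{im}T^j$ for $j\gg0$. $\mu(i)=(-1)^iq^{\binom i2}$. *)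

(* Defs.v *)
From HB Require Import structures.
From mathcomp Require Import all_boot all_order all_algebra.
From mathcomp Require Import boolp.
Set Implicit Arguments. Unset Strict Implicit. Unset Printing Implicit Defensive.
Import Order.TTheory GRing.Theory Num.Theory.
Local Open Scope ring_scope.

(* Vectors of F^n are row vectors 'rV[F]_n; a linear map acts on the right:
   x |-> x *m A.  A partial linear map with domain the row space of D is
   represented by any matrix A (only its values on D matter; every linear map
   from a subspace extends to the whole space). *)

Section Defs.
Variable F : fieldType.
Variable n : nat.

(* V_j = span(b_1,...,b_j), as (the row space of) a diagonal 0/1 matrix *)
Definition Vsp (j : nat) : 'M[F]_n :=
  \matrix_(i, k) ((i == k) && (i < j)%N)%:R.

(* x lies in the domain of the partial composite T^N, where T = (D, A):
   x, xA, ..., xA^(N-1) all lie in D  (T^0 = id has full domain). *)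
Definition in_dom_iter (D A : 'M[F]_n) (N : nat) (x : 'rV[F]_n) : bool :=
  [forall k : 'I_N, (x *m A ^+ k <= D)%MS].

(* T = (D, A) is semi-idempotent: for some N, T acts as the identity on
   im T^N (i.e. im T^N lies in dom T and T y = y there). *)
Definition semi_idempotent (D A : 'M[F]_n) : Prop :=
  exists N : nat, forall x : 'rV[F]_n, in_dom_iter D A N x ->
    ((x *m A ^+ N <= D)%MS /\ (x *m A ^+ N) *m A = x *m A ^+ N).

(* stable rank of an operator: dim im S^j for j >> 0; the ranks of S^j
   stabilize from j = n on (Fitting), so we take j = n. *)
Definition srk (S : 'M[F]_n) : nat := \rank (S ^+ n).
End Defs.

Definition mu (q i : nat) : int := (-1) ^+ i * (q ^ 'C(i, 2))%:Z.

(* Main.v *)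
Require Import Defs.
From HB Require Import structures.
From mathcomp Require Import all_boot all_order all_algebra.
From mathcomp Require Import boolp.
From mathcomp Require Import zify.
Import Order.TTheory GRing.Theory Num.Theory.
Local Open Scope ring_scope.
Set Implicit Arguments. Unset Strict Implicit. Unset Printing Implicit Defensive.
Section General.
Variable F : finFieldType.

Lemma card_rowspace m n (A : 'M[F]_(m, n)) :
  #|[set x : 'rV[F]_n | (x <= A)%MS]| = (#|F| ^ \rank A)%N.
Proof.
have fr := row_base_free A.
have -> : [set x : 'rV[F]_n | (x <= A)%MS] =
          [set y *m row_base A | y : 'rV[F]_(\rank A)].
  apply/setP => x; rewrite inE; apply/idP/imsetP.
    by rewrite -(eq_row_base A) => /submxP [y ->]; exists y.
  by case=> y _ ->; rewrite -(eq_row_base A) submxMl.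
rewrite card_imset; first by rewrite card_mx mul1n.
move: fr => /row_freeP [B HB] y1 y2 H.
by rewrite -[y1]mulmx1 -HB mulmxA H -mulmxA HB mulmx1.
Qed.

Lemma pow_stab n (S : 'M[F]_n) j :
  \rank (S ^+ j.+1) = \rank (S ^+ j) -> forall k, (S ^+ (j + k) :=: S ^+ j)%MS.
Proof.
move=> Hr.
have E1 : (S ^+ j.+1 :=: S ^+ j)%MS.
  apply/eqmxP; rewrite -mxrank_leqif_eq; first by rewrite Hr.
  by rewrite exprS -mulmxE submxMl.
elim=> [|k IH]; first by rewrite addn0.
rewrite addnS exprSr -mulmxE.
apply: eqmx_trans (E1).
by rewrite exprSr -mulmxE; apply: eqmxMr.
Qed.

Lemma fitting n (S : 'M[F]_n) M : S ^+ M.+1 = S ^+ M -> S ^+ n.+1 = S ^+ n.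
Proof.
move=> HM.
have Hex : exists2 j, (j <= n)%N & \rank (S ^+ j.+1) = \rank (S ^+ j).
  have H : forall j, (\rank (S ^+ j) + j <= n)%N \/
             exists2 i, (i < j)%N & \rank (S ^+ i.+1) = \rank (S ^+ i).
    elim=> [|j [IH|[i Hi Hri]]].
    - by left; rewrite expr0 mxrank1 addn0.
    - have Hle : (\rank (S ^+ j.+1) <= \rank (S ^+ j))%N.
        by rewrite exprSr -mulmxE mxrankM_maxl.
      case: (ltnP (\rank (S ^+ j.+1)) (\rank (S ^+ j))) => H.
        by left; rewrite addnS; apply: leq_trans IH; rewrite ltn_add2r.
      by right; exists j => //; apply/eqP; rewrite eqn_leq Hle H.
    - by right; exists i => //; apply: ltnW.
  case: (H n.+1) => [|[i Hi Hri]]; first by rewrite addnS ltnNge leq_addl.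
  by exists i.
case: Hex => j Hj Hr.
have Hn := pow_stab Hr (n - j); rewrite subnKC in Hn => //.
have Hb := pow_stab Hr (n - j + M); rewrite addnA subnKC in Hb => //.
have : (S ^+ n <= S ^+ (n + M))%MS by rewrite Hn Hb.
case/submxP => X HX.
have HK : forall k, S ^+ (M + k) = S ^+ M.
  by elim=> [|k IH]; rewrite ?addn0 // addnS exprSr IH -exprSr HM.
rewrite exprSr HX -mulmxE -mulmxA mulmxE -exprSr -addnS.
by rewrite [(n + M.+1)%N]addnC [(n + M)%N]addnC HK -[M.+1]addn1 -addnA HK.
Qed.

End General.
Section Setup.
Variable F : finFieldType.
Variable n' : nat.
Local Notation n := n'.+1.
Variable AT : 'M[F]_n.

Definition L (x : 'rV[F]_n) : F := x 0 ord_max.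

Lemma L_lin : forall (a : F) (x y : 'rV[F]_n), L (a *: x + y) = a * L x + L y.
Proof. by move=> a x y; rewrite /L !mxE. Qed.
Lemma LD x y : L (x + y) = L x + L y. Proof. by rewrite /L mxE. Qed.
Lemma LB x y : L (x - y) = L x - L y. Proof. by rewrite /L !mxE. Qed.
Lemma LZ a x : L (a *: x) = a * L x. Proof. by rewrite /L mxE. Qed.
Lemma L0 : L 0 = 0. Proof. by rewrite /L mxE. Qed.
Lemma Lsum I (r : seq I) (P : pred I) (g : I -> 'rV[F]_n) :
  L (\sum_(i <- r | P i) g i) = \sum_(i <- r | P i) L (g i).
Proof. by rewrite /L summxE. Qed.

Lemma Vsp_entry (i j : 'I_n) : Vsp F n n' i j = ((i == j) && (i < n')%N)%:R.
Proof. by rewrite /Vsp mxE. Qed.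

Lemma mul_Vsp (x : 'rV[F]_n) : L x = 0 -> x *m Vsp F n n' = x.
Proof.
move=> Hx; apply/rowP => j; rewrite !mxE (bigD1 j) //= big1 ?addr0.
  rewrite Vsp_entry eqxx /=; case: (ltnP j n') => Hj; first by rewrite mulr1.
  have -> : j = ord_max by apply/val_inj/eqP; rewrite /= eqn_leq Hj -ltnS ltn_ord.
  by rewrite mulr0 -Hx.
by move=> i /negbTE Hij; rewrite Vsp_entry Hij mulr0.
Qed.

Lemma inW_Vsp (x : 'rV[F]_n) : (x <= Vsp F n n')%MS = (L x == 0).
Proof.
apply/idP/eqP => [/submxP [y ->]|Hx]; last by rewrite -(mul_Vsp Hx) submxMl.
rewrite /L !mxE big1 // => i _; rewrite Vsp_entry.
suff -> : ((i == ord_max) && (i < n')%N) = false by rewrite mulr0.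
by apply/negbTE/andP => [[/eqP -> ]]; rewrite ltnn.
Qed.

Lemma L_rowVsp (i : 'I_n) : L (row i (Vsp F n n')) = 0.
Proof.
rewrite /L mxE Vsp_entry.
suff -> : ((i == ord_max) && (i < n')%N) = false by [].
by apply/negbTE/andP => [[/eqP -> ]]; rewrite ltnn.
Qed.

Definition Dm (j : nat) (x : 'rV[F]_n) : bool :=
  [forall k : 'I_j, L (x *m AT ^+ k) == 0].

Lemma DmP j x : reflect (forall k, (k < j)%N -> L (x *m AT ^+ k) = 0) (Dm j x).
Proof.
apply: (iffP forallP) => H.
  by move=> k Hk; apply/eqP; exact: (H (Ordinal Hk)).
by move=> k; apply/eqP; apply: H.
Qed.

Lemma Dm0 x : Dm 0 x. Proof. by apply/DmP. Qed.

Lemma DmS j x : Dm j.+1 x = Dm j x && (L (x *m AT ^+ j) == 0).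
Proof.
apply/DmP/andP => [H|[/DmP H1 /eqP H2] k].
  by split; [apply/DmP => k Hk; apply: H; apply: ltnW|apply/eqP/H].
by rewrite ltnS leq_eqVlt => /orP [/eqP ->|]; [|apply: H1].
Qed.

Lemma DmSl j x : Dm j.+1 x = (L x == 0) && Dm j (x *m AT).
Proof.
apply/DmP/andP => [H|[/eqP H1 /DmP H2] [|k] Hk].
- split; first by apply/eqP; have := H 0%N isT; rewrite expr0 mulmx1.
  by apply/DmP => k Hk; rewrite -mulmxA mulmxE -exprS; apply: H.
- by rewrite expr0 mulmx1.
- by rewrite exprS -mulmxE mulmxA H2.
Qed.

Lemma Dm_lin j a x y : Dm j x -> Dm j y -> Dm j (a *: x + y).
Proof.
move=> /DmP Hx /DmP Hy; apply/DmP => k Hk.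
by rewrite mulmxDl -scalemxAl L_lin Hx ?Hy ?mulr0 ?addr0.
Qed.

Lemma Dm_le j i x : (i <= j)%N -> Dm j x -> Dm i x.
Proof. by move=> Hij /DmP H; apply/DmP => k Hk; apply: H; apply: leq_trans Hij. Qed.

Definition ext (S : 'M[F]_n) := forall x, L x = 0 -> x *m S = x *m AT.

Lemma extP S : reflect (ext S) (Vsp F n n' *m S == Vsp F n n' *m AT).
Proof.
apply: (iffP eqP) => [H x Hx|H].
  by rewrite -(mul_Vsp Hx) -!mulmxA H.
apply/row_matrixP => i; rewrite !row_mul; apply: H; exact: L_rowVsp.
Qed.

End Setup.
Section Core.
Variable F : finFieldType.
Variable n' : nat.
Local Notation n := n'.+1.
Variable AT : 'M[F]_n.
Variables (N e : nat) (c0 : 'rV[F]_n).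
Hypothesis HN : forall x, Dm AT N x ->
  L (x *m AT ^+ N) = 0 /\ x *m AT ^+ N *m AT = x *m AT ^+ N.
Hypothesis He : (0 < e)%N.
Hypothesis Hc0 : Dm AT e c0.
Hypothesis Hce : L (c0 *m AT ^+ e) = 1.
Hypothesis Hmax : forall x, Dm AT e.+1 x -> L (x *m AT ^+ e.+1) = 0.

Definition c i := c0 *m AT ^+ i.
Definition ce := c e.
Definition Zp := Dm AT e.+1.
Definition G (t : 'rV[F]_n) : 'M[F]_n :=
  AT + delta_mx ord_max 0 *m (t - ce *m AT).

Lemma Lc i : (i < e)%N -> L (c i) = 0.
Proof. by move=> Hi; move/DmP: Hc0; apply. Qed.
Lemma Lce : L ce = 1. Proof. exact: Hce. Qed.
Lemma cS i : c i *m AT = c i.+1.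
Proof. by rewrite /c -mulmxA mulmxE -exprSr. Qed.

Lemma Z_L x : Zp x -> L x = 0.
Proof. by rewrite /Zp DmSl => /andP [/eqP]. Qed.
Lemma Z_AT x : Zp x -> Zp (x *m AT).
Proof.
move=> Hx; have : Dm AT e.+2 x by rewrite DmS; apply/andP; split => //; apply/eqP/Hmax.
by rewrite DmSl => /andP [].
Qed.
Lemma Z_pow x k : Zp x -> Zp (x *m AT ^+ k).
Proof.
elim: k x => [|k IH] x Hx; first by rewrite expr0 mulmx1.
by rewrite exprS -mulmxE mulmxA; apply: IH; apply: Z_AT.
Qed.
Lemma Z_Lpow x k : Zp x -> L (x *m AT ^+ k) = 0.
Proof. by move=> Hx; apply: Z_L; apply: Z_pow. Qed.
Lemma Z_Dm x k : Zp x -> Dm AT k x.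
Proof. by move=> Hx; apply/DmP => i _; apply: Z_Lpow. Qed.
Lemma Z_fix x : Zp x -> x *m AT ^+ N *m AT = x *m AT ^+ N.
Proof. by move=> Hx; case: (HN (Z_Dm N Hx)). Qed.
Lemma Z_lin a x y : Zp x -> Zp y -> Zp (a *: x + y).
Proof. exact: Dm_lin. Qed.
Lemma Z0 : Zp 0.
Proof. by apply/DmP => k _; rewrite mul0mx L0. Qed.
Lemma ZD x y : Zp x -> Zp y -> Zp (x + y).
Proof. by move=> Hx Hy; rewrite -[x]scale1r; apply: Z_lin. Qed.
Lemma ZZ a x : Zp x -> Zp (a *: x).
Proof. by move=> Hx; rewrite -[_ *: _]addr0; apply: Z_lin => //; apply: Z0. Qed.
Lemma ZN x : Zp x -> Zp (- x).
Proof. by move=> Hx; rewrite -scaleN1r; apply: ZZ. Qed.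
Lemma ZB x y : Zp x -> Zp y -> Zp (x - y).
Proof. by move=> Hx Hy; apply: ZD => //; apply: ZN. Qed.
Lemma Zsum I (r : seq I) (P : pred I) (g : I -> 'rV[F]_n) :
  (forall i, P i -> Zp (g i)) -> Zp (\sum_(i <- r | P i) g i).
Proof. by move=> H; apply: (big_ind (fun v => Zp v)) => //; [apply: Z0|apply: ZD]. Qed.

Lemma col_max (x : 'rV[F]_n) : x *m delta_mx ord_max 0 = (L x)%:M.
Proof.
apply/matrixP => i j; rewrite !ord1 !mxE (bigD1 ord_max) //= big1 ?addr0.
  by rewrite !mxE !eqxx mulr1.
by move=> k /negbTE Hk; rewrite mxE Hk mulr0.
Qed.

Lemma mulG x t : x *m G t = x *m AT + L x *: (t - ce *m AT).
Proof. by rewrite /G mulmxDr mulmxA col_max mul_scalar_mx. Qed.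
Lemma GW x t : L x = 0 -> x *m G t = x *m AT.
Proof. by move=> Hx; rewrite mulG Hx scale0r addr0. Qed.
Lemma Gce t : ce *m G t = t.
Proof. by rewrite mulG Lce scale1r addrC subrK. Qed.
Lemma G_ext t : ext AT (G t).
Proof. by move=> x Hx; apply: GW. Qed.

Lemma ext_G S : ext AT S -> S = G (ce *m S).
Proof.
move=> HS; apply/row_matrixP => i; rewrite !rowE.
set x := delta_mx 0 i.
have Hx : L (x - L x *: ce) = 0 by rewrite LB LZ Lce mulr1 subrr.
rewrite -[x in LHS](subrK (L x *: ce)) mulmxDl HS // mulG.
rewrite mulmxBl -!scalemxAl scalerBr.
by rewrite addrAC -addrA.
Qed.

Lemma GZpow x t k : Zp x -> x *m G t ^+ k = x *m AT ^+ k.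
Proof.
move=> Hx; elim: k => [|k IH]; first by rewrite !expr0.
rewrite !exprSr -!mulmxE !mulmxA IH GW //; exact: Z_Lpow.
Qed.
Lemma ZG x t : Zp x -> x *m G t = x *m AT.
Proof. by move=> Hx; apply: GW; apply: Z_L. Qed.

Lemma Gc t i : (i <= e)%N -> c0 *m G t ^+ i = c i.
Proof.
elim: i => [|i IH] Hi; first by rewrite !expr0 /c expr0.
rewrite exprSr -mulmxE mulmxA IH ?(ltnW Hi) // GW ?cS //; exact: Lc.
Qed.
Lemma Gtop t k : c0 *m G t ^+ (e.+1 + k) = t *m G t ^+ k.
Proof.
by rewrite exprD -mulmxE mulmxA exprSr -mulmxE mulmxA Gc // Gce.
Qed.

Lemma cpow k i : c k *m AT ^+ i = c (k + i).
Proof. by rewrite /c -mulmxA mulmxE -exprD. Qed.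

Lemma decomp_gen k : (k <= e.+1)%N -> forall x, Dm AT (e.+1 - k) x ->
  exists z (lam : nat -> F), Zp z /\ x = z + \sum_(i < k) lam i *: c i.
Proof.
elim: k => [|k IH] Hk x Hx.
  by exists x, (fun=> 0); rewrite big_ord0 addr0; split.
have Hke : (k <= e)%N by [].
set j := (e - k)%N.
have Hj : (e.+1 - k.+1)%N = j by rewrite subSS.
rewrite Hj in Hx.
set mu := L (x *m AT ^+ j).
have Hkj : (k + j)%N = e by rewrite /j subnKC.
have Hcj : Dm AT j (c k).
  apply/DmP => i Hi; rewrite cpow; apply: Lc.
  by rewrite -Hkj ltn_add2l.
have Hx' : Dm AT (e.+1 - k) (x - mu *: c k).
  rewrite subSn // DmS; apply/andP; split.
    by rewrite addrC -scaleNr; apply: Dm_lin.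
  by rewrite mulmxBl -scalemxAl LB LZ cpow Hkj Lce mulr1 subrr.
have [z [lam [Hz Hdec]]] := IH (ltnW Hk) _ Hx'.
exists z, (fun i => if i == k then mu else lam i); split => //.
rewrite big_ord_recr /= eqxx addrA.
rewrite (eq_bigr (fun i : 'I_k => lam i *: c i)); last first.
  by move=> i _; rewrite (ltn_eqF (ltn_ord i)).
by rewrite -Hdec subrK.
Qed.

Lemma decomp x : exists z (lam : nat -> F), Zp z /\ x = z + \sum_(i < e.+1) lam i *: c i.
Proof. by apply: decomp_gen => //; rewrite subnn; apply: Dm0. Qed.
Definition si_mx (S : 'M[F]_n) := exists M, S ^+ M.+1 = S ^+ M.

Lemma mx_rowext (A B : 'M[F]_n) : (forall x : 'rV[F]_n, x *m A = x *m B) -> A = B.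
Proof. by move=> H; apply/row_matrixP => i; rewrite !rowE H. Qed.

Lemma fixpow (S : 'M[F]_n) (x : 'rV[F]_n) k : x *m S = x -> x *m S ^+ k = x.
Proof.
move=> H; elim: k => [|k IH]; first by rewrite expr0 mulmx1.
by rewrite exprSr -mulmxE mulmxA IH H.
Qed.

Lemma cG t i : (i <= e)%N -> c i *m G t ^+ e.+1 = t *m G t ^+ i.
Proof. by move=> Hi; rewrite -(Gc t Hi) -mulmxA mulmxE -exprD addnC Gtop. Qed.

Lemma sumc_G t (lam : nat -> F) :
  (\sum_(i < e.+1) lam i *: c i) *m G t ^+ e.+1 =
  \sum_(i < e.+1) lam i *: (t *m G t ^+ i).
Proof.
rewrite mulmx_suml; apply: eq_bigr => i _.
by rewrite -scalemxAl cG // -ltnS.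
Qed.

Lemma caseA t : Zp t -> si_mx (G t) /\
  (forall x, (x *m G t == x) = (L x == 0) && (x *m AT == x)).
Proof.
move=> Ht.
have key : forall x, Zp (x *m G t ^+ e.+1).
  move=> x; have [z [lam [Hz ->]]] := decomp x.
  rewrite mulmxDl sumc_G GZpow //; apply: ZD; first exact: Z_pow.
  by apply: Zsum => i _; apply: ZZ; rewrite GZpow //; apply: Z_pow.
split.
  exists (e.+1 + N)%N; apply: mx_rowext => x.
  rewrite exprSr -mulmxE mulmxA exprD -mulmxE mulmxA.
  set y := x *m G t ^+ e.+1.
  have Hy : Zp y by apply: key.
  by rewrite GZpow // (ZG t) ?Z_fix //; apply: Z_pow.
move=> x; apply/eqP/andP => [H|[/eqP HL /eqP HA]]; last by rewrite GW.
have Hx : Zp x by rewrite -(fixpow (e.+1) H); apply: key.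
by split; [rewrite Z_L|rewrite -(ZG t Hx) H].
Qed.

Definition wB z0 := ce + z0.

Lemma LwB z0 : Zp z0 -> L (wB z0) = 1.
Proof. by move=> Hz; rewrite /wB LD Lce Z_L // addr0. Qed.

Lemma caseB z0 (t := ce + z0 - z0 *m AT) : Zp z0 -> si_mx (G t) /\
  (forall x, (x *m G t == x) =
     [exists mu : F, (L (x - mu *: wB z0) == 0) && ((x - mu *: wB z0) *m AT == x - mu *: wB z0)]).
Proof.
move=> Hz.
set w := wB z0.
have Hw : w *m G t = w by rewrite mulmxDl Gce (ZG t) // /t subrK.
have HtG : forall i, t *m G t ^+ i = w - z0 *m AT ^+ i.+1.
  elim=> [|i IH]; first by rewrite expr0 mulmx1 expr1 /t /w /wB.
  rewrite exprSr -mulmxE mulmxA IH mulmxBl Hw ZG; last by apply: Z_pow.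
  by rewrite -mulmxA mulmxE -exprSr.
have key : forall x, exists y mu, Zp y /\ x *m G t ^+ e.+1 = y + mu *: w.
  move=> x; have [z [lam [Hz' ->]]] := decomp x.
  rewrite mulmxDl sumc_G GZpow //.
  under eq_bigr => i _ do rewrite HtG scalerBr.
  rewrite sumrB -scaler_suml.
  exists (z *m AT ^+ e.+1 - \sum_(i < e.+1) lam i *: (z0 *m AT ^+ i.+1)), (\sum_(i < e.+1) lam i).
  split; last by rewrite addrA addrAC.
  apply: ZB; first exact: Z_pow.
  by apply: Zsum => i _; apply: ZZ; apply: Z_pow.
split.
  exists (e.+1 + N)%N; apply: mx_rowext => x.
  rewrite exprSr -mulmxE mulmxA exprD -mulmxE mulmxA.
  have [y [mu [Hy ->]]] := key x.
  rewrite !mulmxDl -!scalemxAl (fixpow _ Hw) Hw GZpow // (ZG t) ?Z_fix //.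
  exact: Z_pow.
move=> x; apply/eqP/existsP => [H|[mu /andP [/eqP HL /eqP HA]]].
  have [y [mu [Hy Hx]]] := key x.
  rewrite (fixpow _ H) in Hx.
  exists mu; rewrite Hx addrK Z_L // eqxx /=.
  have : (y + mu *: w) *m G t = y + mu *: w by rewrite -Hx.
  by rewrite mulmxDl -scalemxAl Hw ZG // => /addIr ->.
rewrite -[x](subrK (mu *: w)) mulmxDl -scalemxAl Hw GW //.
by rewrite HA.
Qed.
Lemma caseC t : si_mx (G t) ->
  Zp t \/ exists z0, Zp z0 /\ t = ce + z0 - z0 *m AT.
Proof.
move=> [M HM].
set S := G t.
have HMk : forall d, S ^+ (M + d).+1 = S ^+ (M + d).
  by elim=> [|d IH]; rewrite ?addn0 // addnS exprS IH -exprS.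
have [z [lam [Hz Ht]]] := decomp t.
pose u k := L (c0 *m S ^+ k).
have U1 : forall k, (k < e)%N -> u k = 0.
  by move=> k Hk; rewrite /u Gc ?Lc // ltnW.
have U1e : u e = 1 by rewrite /u Gc.
have cSk : forall i k, (i <= e)%N -> c i *m S ^+ k = c0 *m S ^+ (i + k).
  by move=> i k Hi; rewrite -(Gc t Hi) -mulmxA mulmxE -exprD.
have U2 : forall k, u (e.+1 + k)%N = \sum_(i < e.+1) lam i * u (i + k)%N.
  move=> k; rewrite /u Gtop -/S {1}Ht mulmxDl mulmx_suml LD Lsum.
  rewrite GZpow // Z_Lpow // add0r; apply: eq_bigr => i _.
  by rewrite -scalemxAl LZ cSk // -ltnS.
have U3 : forall k, (M <= k)%N -> u k.+1 = u k.
  move=> k Hk; rewrite /u; have := HMk (k - M)%N; rewrite subnKC // => ->.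
  by [].
have Hlow : forall i, (i < e)%N -> lam i = 0.
  move=> i0 Hi0; apply/eqP; apply/negPn/negP => Hne.
  have Hex : exists i, (i < e)%N && (lam i != 0) by exists i0; rewrite Hi0.
  case: (ex_minnP Hex) => j /andP [Hje Hj] Hmin.
  have Hbelow : forall i, (i < j)%N -> lam i = 0.
    move=> i Hi; apply/eqP/negPn/negP => Hn.
    have := Hmin i; rewrite Hn andbT (ltn_trans Hi Hje) => /(_ isT).
    by rewrite leqNgt Hi.
  pose v k := u k.+1 - u k.
  have V2 : forall k, v (e.+1 + k)%N = \sum_(i < e.+1) lam i * v (i + k)%N.
    move=> k; rewrite /v -addnS !U2 -sumrB; apply: eq_bigr => i _.
    by rewrite addnS mulrBr.
  have P : forall d k, (j <= k)%N -> (M <= k + d)%N -> v k = 0.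
    elim=> [|d IH] k Hjk Hkd.
      by rewrite /v U3 ?subrr // -(addn0 k).
    have Hrec := V2 (k - j)%N.
    have Hj1 : (j < e.+1)%N by apply: ltnW.
    rewrite (bigD1 (Ordinal Hj1)) //= big1 ?addr0 in Hrec; last first.
      move=> i /eqP Hij; have : (i : nat) <> j by move=> H; apply: Hij; apply: val_inj.
      move=> Hij'; case: (ltngtP i j) => Hc; first by rewrite Hbelow // mul0r.
        by rewrite (IH (i + (k - j))%N) ?mulr0 //; lia.
      by case: Hij'.
    rewrite subnKC // in Hrec.
    have HL : v (e.+1 + (k - j))%N = 0.
      by apply: (IH _); lia.
    rewrite HL in Hrec.
    by apply/eqP; move: Hrec => /esym /eqP; rewrite mulf_eq0 (negbTE Hj).
  have Hv : v e.-1 = 0 by apply: (P M); lia.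
  move: Hv; rewrite /v prednK // U1e U1; last by lia.
  by rewrite subr0 => /eqP; rewrite oner_eq0.
have Ht2 : t = z + lam e *: ce.
  rewrite {1}Ht big_ord_recr /= big1 ?add0r //.
  by move=> i _; rewrite Hlow ?scale0r.
set lm := lam e.
have {}Ht2 : t = z + lm *: ce by [].
have Hpow : forall k, exists y, Zp y /\ ce *m S ^+ k = lm ^+ k *: ce + y.
  elim=> [|k [y [Hy IH]]].
    by exists 0; rewrite !expr0 mulmx1 scale1r addr0; split => //; exact: Z0.
  exists (lm ^+ k *: z + y *m AT); split; first by apply: Z_lin => //; apply: Z_AT.
  rewrite exprSr -mulmxE mulmxA IH mulmxDl -scalemxAl Gce (ZG t) // {1}Ht2.
  rewrite scalerDr scalerA -exprSr.
  by rewrite addrAC addrC.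
have HLp : forall k, L (ce *m S ^+ k) = lm ^+ k.
  by move=> k; have [y [Hy ->]] := Hpow k; rewrite LD LZ Lce mulr1 Z_L // addr0.
have Hlm : lm ^+ M * (lm - 1) = 0.
  by rewrite mulrBr mulr1 -exprSr -!HLp HM subrr.
move: Hlm => /eqP; rewrite mulf_eq0 expf_eq0 subr_eq0 => /orP [/andP [_ /eqP H0]|/eqP H1].
  by left; rewrite Ht2 H0 scale0r addr0.
right.
have Hsum : forall k, ce *m S ^+ k = ce + \sum_(i < k) z *m AT ^+ i.
  elim=> [|k IH]; first by rewrite expr0 mulmx1 big_ord0 addr0.
  rewrite exprSr -mulmxE mulmxA IH mulmxDl Gce mulmx_suml big_ord_recl /=.
  rewrite expr0 mulmx1 Ht2 H1 scale1r [z + ce]addrC -addrA; congr (_ + (_ + _)).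
  apply: eq_bigr => i _; rewrite (ZG t); last by apply: Z_pow.
  by rewrite -mulmxA mulmxE -exprSr.
have HzM : z *m AT ^+ M = 0.
  have := congr1 (mulmx ce) HM; rewrite !Hsum big_ord_recr /=.
  by move=> /addrI /eqP; rewrite addrC -subr_eq0 addrK => /eqP.
exists (\sum_(i < M) z *m AT ^+ i); split.
  by apply: Zsum => i _; apply: Z_pow.
have Htel : (\sum_(i < M) z *m AT ^+ i) *m AT - \sum_(i < M) z *m AT ^+ i = - z.
  rewrite mulmx_suml -sumrB.
  rewrite (eq_bigr (fun i : 'I_M => z *m AT ^+ i.+1 - z *m AT ^+ i)); last first.
    by move=> i _; rewrite -mulmxA mulmxE -exprSr.
  rewrite -(big_mkord predT (fun i => z *m AT ^+ i.+1 - z *m AT ^+ i)).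
  by rewrite telescope_sumr // HzM expr0 mulmx1 sub0r.
rewrite -addrA -opprB Htel opprK Ht2 H1 scale1r addrC.
by [].
Qed.
Definition phi z := ce + z - z *m AT.
Definition Zs := [set t : 'rV[F]_n | Zp t].
Definition Bs := phi @: Zs.
Definition FixT := [set x : 'rV[F]_n | (L x == 0) && (x *m AT == x)].
Definition fixset (S : 'M[F]_n) := [set x : 'rV[F]_n | x *m S == x].

Lemma valid_iff t : si_mx (G t) <-> (t \in Zs) || (t \in Bs).
Proof.
split.
  move/caseC => [Ht|[z0 [Hz ->]]]; first by rewrite inE Ht.
  by apply/orP; right; apply/imsetP; exists z0; rewrite ?inE.
case/orP => [|/imsetP [z0]]; first by rewrite inE => /caseA [].
by rewrite inE => Hz ->; case: (caseB Hz).
Qed.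

Lemma card_fixset S : si_mx S -> #|fixset S| = (#|F| ^ srk S)%N.
Proof.
move=> [M HM]; have Hf := fitting HM.
rewrite /srk -card_rowspace; apply: eq_card => x; rewrite !inE.
apply/eqP/idP => [H|/submxP [y ->]].
  by rewrite -(fixpow n H) submxMl.
by rewrite -mulmxA mulmxE -exprSr Hf.
Qed.

Lemma fixset_A t : Zp t -> fixset (G t) = FixT.
Proof. by move=> Ht; apply/setP => x; rewrite !inE; case: (caseA Ht) => _ ->. Qed.

Lemma FixT_Z a : a \in FixT -> Zp a.
Proof.
rewrite inE => /andP [/eqP HL /eqP HA]; apply/DmP => k _.
by rewrite fixpow.
Qed.

Lemma card_fixset_B z0 : Zp z0 -> #|fixset (G (phi z0))| = (#|FixT| * #|F|)%N.
Proof.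
move=> Hz; case: (caseB Hz) => _ Hfix.
set w := wB z0.
have -> : fixset (G (phi z0)) =
   (fun p : 'rV[F]_n * F => p.1 + p.2 *: w) @: setX FixT [set: F].
  apply/setP => x; rewrite inE [_ == _]Hfix; apply/existsP/imsetP.
    case=> mu H; exists (x - mu *: w, mu); first by rewrite !inE H.
    by rewrite /= subrK.
  case=> [[a mu]]; rewrite !inE /= andbT => Ha ->; exists mu.
  by rewrite addrK.
rewrite card_in_imset ?cardsX ?cardsT //.
move=> [a1 m1] [a2 m2]; rewrite !inE /= !andbT => /andP [/eqP H1 _] /andP [/eqP H2 _] Heq.
have Hm : m1 = m2.
  by move: (congr1 (fun v => L v) Heq); rewrite !LD !LZ LwB // H1 H2 !add0r !mulr1.
by rewrite Hm in Heq *; move/addIr: Heq => ->.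
Qed.

Lemma fiber_card z1 : Zp z1 -> #|[set z in Zs | phi z == phi z1]| = #|FixT|.
Proof.
move=> Hz1.
have -> : [set z in Zs | phi z == phi z1] = (fun a => z1 + a) @: FixT.
  apply/setP => z; rewrite !inE; apply/andP/imsetP.
    move=> [Hz /eqP Hp]; exists (z - z1); last by rewrite addrC subrK.
    rewrite inE; apply/andP; split; first by rewrite Z_L //; apply: ZB.
    move: Hp; rewrite /phi -!addrA => /addrI H.
    have E : (z - z1) - (z - z1) *m AT = (z - z *m AT) - (z1 - z1 *m AT).
      by rewrite mulmxBl !opprB addrACA [in RHS]addrACA [in RHS](addrC (- (z *m AT))).
    by rewrite eq_sym -subr_eq0 E H subrr.
  case=> a Ha ->; have HaZ := FixT_Z Ha; split; first by apply: ZD.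
  move: Ha; rewrite inE => /andP [_ /eqP HA].
  by apply/eqP; rewrite /phi mulmxDl HA addrA opprD addrACA subrr addr0.
by rewrite card_imset //; apply: addrI.
Qed.

Lemma rank_phi z : Zp z -> \rank (G (phi z)) = \rank (G z).
Proof.
move=> Hz.
set u := c e.-1 - z.
have Hu : L u = 0 by rewrite LB Lc ?Z_L ?subr0 // prednK.
have HuG : u *m G z = ce - z *m AT.
  by rewrite GW // mulmxBl cS prednK.
clearbody u.
have HGe : G (phi z) = (1%:M + delta_mx ord_max 0 *m u) *m G z.
  rewrite mulmxDl mul1mx -mulmxA HuG /G /phi -[RHS]addrA; congr (_ + _).
  rewrite -mulmxDr; congr (_ *m _).
  by rewrite -addrA [in RHS]addrACA (addrC ce) (addrC (- (z *m AT))).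
have Hunit : (1%:M + delta_mx ord_max 0 *m u) \in unitmx.
  have : (1%:M + delta_mx ord_max 0 *m u) *m (1%:M - delta_mx ord_max 0 *m u) = 1%:M.
    rewrite mulmxDl mul1mx mulmxBr mulmx1 -mulmxA (mulmxA u) col_max Hu.
    by rewrite mul_scalar_mx scale0r mulmx0 subr0 subrK.
  by case/mulmx1_unit.
have Hf : row_full ((1%:M + delta_mx ord_max 0 *m u)%R : 'M[F]_n) by rewrite row_full_unit.
by rewrite HGe (eqmxMfull _ Hf).
Qed.
Lemma siP (S : 'M[F]_n) : semi_idempotent 1%:M S <-> si_mx S.
Proof.
split.
  case=> M HM; exists M; apply: mx_rowext => x.
  have Hd : in_dom_iter 1%:M S M x by apply/forallP => k; apply: submx1.
  by case: (HM x Hd) => _; rewrite exprSr -mulmxE mulmxA.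
case=> M HM; exists M => x _; split; first exact: submx1.
by rewrite -mulmxA mulmxE -exprSr HM.
Qed.

Lemma q_gt1 : (1 < #|F|)%N. Proof. exact: card_finNzRing_gt1. Qed.

Lemma mu_rel (q k : nat) : mu q k * (q ^ k)%:Z + mu q k.+1 = 0.
Proof.
rewrite /mu binS bin1 expnD PoszM exprS mulN1r mulNr -!mulrA.
by rewrite addrN.
Qed.

Lemma core_sum (r : nat) (f : nat -> int) :
  \sum_(S : 'M[F]_n | [&& (\rank S <= r)%N
                       & Vsp F n n' *m S == Vsp F n n' *m AT]
                      && `[< semi_idempotent 1%:M S >])
     mu #|F| (srk S) * f (\rank S) = 0.
Proof.
rewrite (reindex_onto G (fun S => ce *m S)); last first.
  by move=> S /andP [/andP [_ /extP HS] _]; rewrite -ext_G.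
set q := #|F|.
set f0 := srk (G 0).
have HsiZ : forall t, t \in Zs -> si_mx (G t).
  by move=> t Ht; apply/valid_iff; rewrite Ht.
have HsiB : forall t, t \in Bs -> si_mx (G t).
  by move=> t Ht; apply/valid_iff; rewrite Ht orbT.
have HFixT : #|FixT| = (q ^ f0)%N.
  by rewrite -(fixset_A Z0) card_fixset //; apply: HsiZ; rewrite inE Z0.
have srkZ : forall t, t \in Zs -> srk (G t) = f0.
  move=> t Ht; apply: (expnI q_gt1); rewrite -(card_fixset (HsiZ _ Ht)) -HFixT.
  by rewrite fixset_A //; rewrite inE in Ht.
have srkB : forall t, t \in Bs -> srk (G t) = f0.+1.
  move=> t1 Ht1; apply: (expnI q_gt1); rewrite -(card_fixset (HsiB _ Ht1)).
  case/imsetP: Ht1 => z; rewrite inE => Hz ->.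
  by rewrite card_fixset_B // HFixT expnSr.
set h := fun t => if (\rank (G t) <= r)%N then f (\rank (G t)) else 0.
rewrite (eq_bigl (fun t => (t \in [predU Zs & Bs]) && (\rank (G t) <= r)%N)); last first.
  move=> t; rewrite Gce eqxx andbT.
  have -> : Vsp F n n' *m G t == Vsp F n n' *m AT by apply/extP/G_ext.
  rewrite andbT.
  have -> : `[< semi_idempotent 1%:M (G t) >] = (t \in Zs) || (t \in Bs).
    by apply/asboolP/idP => [/siP/valid_iff|/valid_iff/siP].
  by rewrite andbC.
rewrite big_mkcondr bigU /=; last first.
  rewrite disjoint_subset; apply/subsetP => t; rewrite !inE => Hz.
  apply/imsetP => [[z Hz' Ht]]; rewrite inE in Hz'.
  move: (Z_L Hz); rewrite Ht /phi LB LD Lce Z_L // Z_L ?addr0 ?subr0.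
    by move/eqP; rewrite oner_eq0.
  exact: Z_AT.
rewrite (eq_bigr (fun t => mu q f0 * h t)); last first.
  by move=> t Ht; rewrite srkZ // /h; case: ifP; rewrite ?mulr0.
rewrite [X in _ + X](eq_bigr (fun t => mu q f0.+1 * h t)); last first.
  by move=> t Ht; rewrite srkB // /h; case: ifP; rewrite ?mulr0.
rewrite -!mulr_sumr.
have HZB : \sum_(t in Zs) h t = (\sum_(t in Bs) h t) *+ (q ^ f0).
  rewrite (eq_bigr (fun t => h (phi t))); last first.
    by move=> t Ht; rewrite /h rank_phi //; rewrite inE in Ht.
  rewrite (partition_big_imset phi) /= -sumrMnl; apply: eq_bigr => j Hj.
  rewrite (eq_bigr (fun=> h j)); last by move=> i /andP [_ /eqP ->].
  rewrite sumr_const; congr (_ *+ _).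
  case/imsetP: Hj => z1 Hz1 ->; rewrite -HFixT -(fiber_card (z1 := z1)); last by rewrite inE in Hz1.
  by apply: eq_card => i; rewrite inE.
rewrite HZB -mulr_natr natz mulrCA [mu q f0.+1 * _]mulrC -mulrDr.
by rewrite mu_rel mulr0.
Qed.

End Core.

Unset Implicit Arguments.

Theorem proposition3p4 (F : finFieldType) (n : nat) (hn : (0 < n)%N)
  (AT : 'M[F]_n)
  (hT : semi_idempotent (@Vsp F n n.-1) AT)
  (himT : ~~ (@Vsp F n n.-1 *m AT <= @Vsp F n n.-1)%MS)
  (r : nat) (f : nat -> int) :
  \sum_(S : 'M[F]_n | [&& (\rank S <= r)%N
                       & @Vsp F n n.-1 *m S == @Vsp F n n.-1 *m AT]
                      && `[< semi_idempotent 1%:M S >])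
     mu #|F| (srk S) * f (\rank S) = 0.
Proof.
case: n hn AT hT himT => // n' _ AT [N hN] himT.
have HN : forall x, Dm AT N x ->
    L (x *m AT ^+ N) = 0 /\ x *m AT ^+ N *m AT = x *m AT ^+ N.
  move=> x Hx; have Hd : in_dom_iter (Vsp F n'.+1 n') AT N x.
    by apply/forallP => k; rewrite inW_Vsp; move/forallP: Hx; apply.
  by case: (hN x Hd); rewrite inW_Vsp => /eqP.
have [x0 [Hx0 Hx0T]] : exists x, L x = 0 /\ L (x *m AT) != 0.
  case/row_subPn: himT => i; rewrite row_mul inW_Vsp => H.
  by exists (row i (Vsp F n'.+1 n')); rewrite L_rowVsp.
pose Q e := [exists x, Dm AT e x && (L (x *m AT ^+ e) != 0)].
have Q1 : exists i, Q i.
  exists 1%N; apply/existsP; exists x0; rewrite expr1 Hx0T andbT.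
  by apply/DmP => k; rewrite ltnS leqn0 => /eqP ->; rewrite expr0 mulmx1.
have Qb : forall i, Q i -> (i <= N)%N.
  move=> i /existsP [x /andP [Hx HL]]; rewrite leqNgt; apply/negP => Hi.
  have [HLN HfN] := HN x (Dm_le (ltnW Hi) Hx).
  have Hk : forall k, x *m AT ^+ (N + k) = x *m AT ^+ N.
    elim=> [|k IH]; first by rewrite addn0.
    by rewrite addnS exprSr -mulmxE mulmxA IH HfN.
  by move: HL; rewrite -(subnKC (ltnW Hi)) Hk HLN eqxx.
case: (ex_maxnP Q1 Qb) => e /existsP [x /andP [Hx HLx]] Hmaxe.
set g := L (x *m AT ^+ e).
pose c0 := g^-1 *: x.
have Hc0 : Dm AT e c0 by rewrite /c0 -[_ *: x]addr0; apply: Dm_lin => //; apply/DmP => k _; rewrite mul0mx L0.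
have Hce : L (c0 *m AT ^+ e) = 1 by rewrite -scalemxAl LZ mulVf.
have He : (0 < e)%N by apply: Hmaxe; case: Q1 => i Hi; apply/existsP; exists x0; rewrite expr1 Hx0T andbT; apply/DmP => k; rewrite ltnS leqn0 => /eqP ->; rewrite expr0 mulmx1.
have Hmax : forall y, Dm AT e.+1 y -> L (y *m AT ^+ e.+1) = 0.
  move=> y Hy; apply/eqP/negPn/negP => Hne.
  have : (e.+1 <= e)%N by apply: Hmaxe; apply/existsP; exists y; rewrite Hy.
  by rewrite ltnn.
exact: (core_sum HN He Hc0 Hce Hmax r f).
Qed.
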